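(* Let $w\in\mathcal S_n$ and $a\in\mathrm R(w)$ with $a\notin[a_{\min}]$. Then there exists $b\in\mathrm R(w)$ such that $[b]$ and $[a]$ are adjacent in $C(w)$ (some word of $[b]$ and some word of $[a]$ differ by a single long braid relation) and $\mathrm{sup}(b)\subsetneq\mathrm{sup}(a)$. Similarly, if $a\notin[a_{\max}]$, there exists $b\in\mathrm R(w)$ with $[b]$ adjacent to $[a]$ in $C(w)$ and $\mathrm{sup}(a)\subsetneq\mathrm{sup}(b)$.
   Context: Permutations are in one-line notation; $\mathrm{Des}(u)=\{i:u_i>u_{i+1}\}$. A word $a=a_1\cdots a_\ell$ with letters in $\{1,\dots,n-1\}$ acts on a word of length $n$ by successively swapping the entries in positions $a_j$ and $a_j+1$. $\mathrm R(w)$: reduced words of $w$ (length $\ell(w)$ = number of inversions, action on $12\cdots n$ yields $w$). Commutation: replace a factor $ij$, $|i-j|\ge2$, by $ji$; long braid relation: replace $i(i+1)i$ by $(i+1)i(i+1)$ or vice versa; $[a]$ is the commutation class of $a$. $C(w)$: vertices are commutation classes, $[a]\ne[b]$ adjacent if some $a'\in[a]$, $b'\in[b]$ differ by one long braid relation. $a_{\min}$ (resp. $a_{\max}$): set $w^0=w$, for $j=0,\dots,\ell(w)-1$ let $i_j$ be the smallest (resp. largest) element of $\mathrm{Des}(w^j)$ and obtain $w^{j+1}$ by swapping the entries in positions $i_j,i_j+1$ of $w^j$; the word is $i_{\ell(w)-1}\cdots i_0$. For an inversion $(p,q)$ of $w$, $P_a(p,q)$ is the index of the step of $a$ swapping $p$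 and $q$. $\mathrm T_w$: triples $(x,y,z)$, $x<y<z$, with $z,y,x$ in this order in $w$. $\Gamma(a,(x,y,z))=1$ if $P_a(y,x)>P_a(z,y)$, else $0$. $\mathrm{sup}(a)=\{t\in\mathrm T_w:\Gamma(a,t)=1\}$. *)

(* Defs.v *)
(* permutations and words are represented as seq nat,
   positions and letters are 1-indexed as in the paper. *)
From Stdlib Require Import Relations.
From mathcomp Require Import all_boot.
Set Implicit Arguments. Unset Strict Implicit. Unset Printing Implicit Defensive.

(* w is a permutation of {1..n} in one-line notation *)
Definition is_perm (n : nat) (w : seq nat) : Prop := perm_eq w (iota 1 n).

(* swap the entries in positions i and i+1 (1-indexed) *)
Definition swap_at (i : nat) (u : seq nat) : seq nat :=
  set_nth 0 (set_nth 0 u i.-1 (nth 0 u i)) i (nth 0 u i.-1).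

Definition act (a : seq nat) (u : seq nat) : seq nat :=
  foldl (fun v i => swap_at i v) u a.

Definition ninv (w : seq nat) : nat :=
  sumn [seq ((i < j) && (nth 0 w j < nth 0 w i) : nat)
       | i <- iota 0 (size w), j <- iota 0 (size w)].

Definition reduced (n : nat) (w a : seq nat) : Prop :=
  all (fun i => (1 <= i) && (i <= n.-1)) a /\
  size a = ninv w /\ act a (iota 1 n) = w.

Definition comm_step (a b : seq nat) : Prop :=
  exists x y i j, ((i + 2 <= j) || (j + 2 <= i)) /\
    a = x ++ [:: i; j] ++ y /\ b = x ++ [:: j; i] ++ y.

Definition comm_eq : seq nat -> seq nat -> Prop := clos_refl_trans _ comm_step.

Definition braid_step (a b : seq nat) : Prop :=
  exists x y i,
    (a = x ++ [:: i; i.+1; i] ++ y /\ b = x ++ [:: i.+1; i; i.+1] ++ y) \/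
    (a = x ++ [:: i.+1; i; i.+1] ++ y /\ b = x ++ [:: i; i.+1; i] ++ y).

Definition adjacent (a b : seq nat) : Prop :=
  ~ comm_eq a b /\
  exists a' b', comm_eq a a' /\ comm_eq b b' /\ braid_step a' b'.

(* descent set Des(u) (1-indexed, increasing) *)
Definition des (u : seq nat) : seq nat :=
  [seq i <- iota 1 (size u).-1 | nth 0 u i < nth 0 u i.-1].

Fixpoint sort_steps (pick : seq nat -> nat) (fuel : nat) (u : seq nat)
  : seq nat :=
  match fuel with
  | 0 => [::]
  | f.+1 => let i := pick (des u) in i :: sort_steps pick f (swap_at i u)
  end.

(* a_min = i_{l-1} ... i_0 with i_j the smallest descent of w^j *)
Definition amin (w : seq nat) : seq nat :=
  rev (sort_steps (head 0) (ninv w) w).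
Definition amax (w : seq nat) : seq nat :=
  rev (sort_steps (last 0) (ninv w) w).

Fixpoint steps (a : seq nat) (u : seq nat) : seq (nat * nat) :=
  match a with
  | [::] => [::]
  | i :: a' => (nth 0 u i.-1, nth 0 u i) :: steps a' (swap_at i u)
  end.

(* P_a(p,q): (0-based) index of the step of a swapping p and q,
   when a acts on 12...n *)
Definition P (n : nat) (a : seq nat) (p q : nat) : nat :=
  find (fun pr => (pr == (p, q)) || (pr == (q, p))) (steps a (iota 1 n)).

Definition Tw (w : seq nat) : seq (nat * nat * nat) :=
  [seq t <- flatten [seq [seq (x, y, z) | y <- w, z <- w] | x <- w] |
     let: (x, y, z) := t in
     [&& x < y, y < z, index z w < index y w & index y w < index x w]].

Definition Gamma (n : nat) (a : seq nat) (t : nat * nat * nat) : bool :=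
  let: (x, y, z) := t in P n a z y < P n a y x.

Definition sup (n : nat) (w a : seq nat) : seq (nat * nat * nat) :=
  [seq t <- Tw w | Gamma n a t].

Definition strict_subset (s1 s2 : seq (nat * nat * nat)) : Prop :=
  {subset s1 <= s2} /\ ~ {subset s2 <= s1}.

(* Main.v *)
Set Warnings "-notation-overridden".
Require Import Defs.
From mathcomp Require Import all_boot zify.
Set Implicit Arguments. Unset Strict Implicit. Unset Printing Implicit Defensive.

Lemma ninv_alt w : ninv w =
  sumn [seq count (fun j => (i < j) && (nth 0 w j < nth 0 w i)) (iota 0 (size w)) | i <- iota 0 (size w)].
Proof.
rewrite /ninv sumn_flatten -map_comp; congr sumn; apply: eq_map => i /=.
by rewrite sumn_count.
Qed.

Lemma iota1 n : iota 1 n = map S (iota 0 n).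
Proof. by rewrite -(addn0 1) iotaDl; apply: eq_map => ?; rewrite add1n. Qed.

Lemma ninv_cons x s : ninv (x :: s) = count (fun y => y < x) s + ninv s.
Proof.
rewrite !ninv_alt /= iota1 /=.
congr (_ + _).
  rewrite count_map /=.
  by rewrite -{3}(mkseq_nth 0 s) /mkseq count_map.
rewrite -map_comp; congr sumn; apply: eq_map => i /=.
by rewrite count_map add0n.
Qed.

Lemma swapS i x s : 0 < i -> swap_at i.+1 (x :: s) = x :: swap_at i s.
Proof. by case: i. Qed.

Lemma swap_dec l p q r : swap_at (size l).+1 (l ++ p :: q :: r) = l ++ q :: p :: r.
Proof. by elim: l => [|x l IH] //=; rewrite swapS // IH. Qed.

Lemma decomp u i : 0 < i < size u -> exists l r,
  size l = i.-1 /\ u = l ++ nth 0 u i.-1 :: nth 0 u i :: r.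
Proof.
move=> /andP[i0 iu]; exists (take i.-1 u), (drop i.+1 u); split.
  by rewrite size_take; case: ifP => //; lia.
rewrite -{1}(cat_take_drop i.-1 u); congr (_ ++ _).
rewrite (drop_nth 0); last by lia.
rewrite prednK // (drop_nth 0) //.
Qed.

Lemma nth_swap i u k : nth 0 (swap_at i u) k =
  if k == i then nth 0 u i.-1 else if k == i.-1 then nth 0 u i else nth 0 u k.
Proof. by rewrite /swap_at !nth_set_nth /= nth_set_nth. Qed.

Lemma size_swap i u : 0 < i < size u -> size (swap_at i u) = size u.
Proof. by move=> H; rewrite /swap_at !size_set_nth; lia. Qed.

Lemma swapK i u : 0 < i < size u -> swap_at i (swap_at i u) = u.
Proof.
move=> H; apply: (@eq_from_nth _ 0); first by rewrite !size_swap ?size_swap.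
move=> k _; rewrite !nth_swap.
case: (k =P i) => [->|ki]; first by rewrite eqxx; case: (i.-1 =P i) => //; lia.
case: (k =P i.-1) => [->|//]; by rewrite eqxx.
Qed.

Fixpoint good (u : seq nat) (a : seq nat) : bool :=
  if a is i :: a' then
    [&& 0 < i, i < size u, nth 0 u i.-1 < nth 0 u i & good (swap_at i u) a']
  else true.

Lemma act_cons i a u : act (i :: a) u = act a (swap_at i u).
Proof. by []. Qed.

Lemma act_cat a b u : act (a ++ b) u = act b (act a u).
Proof. by rewrite /act foldl_cat. Qed.

Lemma good_cat u a b : good u (a ++ b) = good u a && good (act a u) b.
Proof.
elim: a u => [|i a IH] u //=; rewrite IH.
by rewrite !andbA.
Qed.

Lemma steps_cat a b u : steps (a ++ b) u = steps a u ++ steps b (act a u).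
Proof. by elim: a u => [|i a IH] u //=; rewrite IH. Qed.

Lemma size_act u a : good u a -> size (act a u) = size u.
Proof.
elim: a u => [|i a IH] u //= /and4P[H1 H2 _ H].
by rewrite IH // size_swap ?H1.
Qed.
Lemma ninv_block l p q r :
  ninv (l ++ q :: p :: r) + (q < p) = ninv (l ++ p :: q :: r) + (p < q).
Proof.
elim: l => [|x l IH] /=.
  rewrite !ninv_cons /=; lia.
rewrite !ninv_cons.
have -> : count (fun y => y < x) (l ++ q :: p :: r) = count (fun y => y < x) (l ++ p :: q :: r).
  by rewrite !count_cat /=; lia.
lia.
Qed.

Lemma ninv_swap i u : 0 < i < size u ->
  ninv (swap_at i u) + (nth 0 u i < nth 0 u i.-1) = ninv u + (nth 0 u i.-1 < nth 0 u i).
Proof.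
move=> H; have [l [r [sl ->]]] := decomp H.
have -> : i = (size l).+1 by lia.
rewrite swap_dec. have E1 : forall s, nth 0 (l ++ s) (size l).+1.-1 = nth 0 s 0 by move=> s; rewrite /= nth_cat ltnn subnn.
have E2 : forall s, nth 0 (l ++ s) (size l).+1 = nth 0 s 1 by move=> s; rewrite nth_cat ltnNge leqnSn /= subSnn.
by rewrite !E1 !E2 /= ninv_block.
Qed.

Lemma R1 a u : all (fun i => 0 < i < size u) a ->
  ninv (act a u) <= ninv u + size a /\
  (ninv (act a u) = ninv u + size a -> good u a).
Proof.
elim: a u => [|i a IH] u //=.
  by move=> _; split => //; rewrite addn0.
case/andP=> Hi Ha.
have Hs := size_swap Hi.
have Ha' : all (fun j => 0 < j < size (swap_at i u)) a by rewrite Hs.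
have [H1 H2] := IH (swap_at i u) Ha'.
have Hn := ninv_swap Hi.
split.
  by move: Hn; case: (_ < _); case: (_ < _) => /=; lia.
move=> E; case/andP: Hi => -> -> /=.
case: (ltnP (nth 0 u i.-1) (nth 0 u i)) => Hl /=.
  apply: H2; move: Hn; rewrite Hl; case: (_ < _) => /=; lia.
have F : (nth 0 u i.-1 < nth 0 u i) = false by rewrite ltnNge Hl.
move: Hn; rewrite F; case: (_ < _) => /=; lia.
Qed.

Lemma good_ninv a u : good u a -> ninv (act a u) = ninv u + size a.
Proof.
elim: a u => [|i a IH] u //=; first by rewrite addn0.
case/and4P=> H0 H1 H2 H3; rewrite IH //.
have := ninv_swap (i:=i) (u:=u); rewrite H0 H1 H2 /= ltnNge ltnW //=; lia.
Qed.

Lemma good_range a u : good u a -> all (fun i => 0 < i < size u) a.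
Proof.
elim: a u => [|i a IH] u //= /and4P[H0 H1 H2 H3].
rewrite H0 H1 /=; move: (IH _ H3); by rewrite size_swap ?H0.
Qed.

Lemma ninv_iota m n : ninv (iota m n) = 0.
Proof.
elim: n m => [|n IH] m //=; rewrite ninv_cons IH addn0.
rewrite (@eq_in_count _ _ pred0) ?count_pred0 // => y; rewrite mem_iota /=; lia.
Qed.

Lemma reduced_good n w a : reduced n w a -> good (iota 1 n) a.
Proof.
case=> Hr [Hs Ha].
have Hr' : all (fun i => 0 < i < size (iota 1 n)) a.
  apply/allP => i /(allP Hr); rewrite size_iota; lia.
have [_ H] := R1 Hr'; apply: H.
by rewrite Ha ninv_iota Hs.
Qed.

Lemma perm_swap i u : 0 < i < size u -> perm_eq (swap_at i u) u.
Proof.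
move=> H; have [l [r [sl E]]] := decomp H.
have -> : i = (size l).+1 by lia.
rewrite E swap_dec perm_cat2l; apply/permP => f /=; lia.
Qed.

Lemma good_perm a u : good u a -> perm_eq (act a u) u.
Proof.
elim: a u => [|i a IH] u //= /and4P[H0 H1 H2 H3].
apply: perm_trans (IH _ H3) _; apply: perm_swap; by rewrite H0.
Qed.

Lemma good_uniq a u : good u a -> uniq u -> uniq (act a u).
Proof. by move=> /good_perm/perm_uniq ->. Qed.

Lemma comm_local i j v : (i + 2 <= j) || (j + 2 <= i) -> good v [:: i; j] ->
  [/\ good v [:: j; i], act [:: i; j] v = act [:: j; i] v,
      steps [:: i; j] v = [:: (nth 0 v i.-1, nth 0 v i); (nth 0 v j.-1, nth 0 v j)] &
      steps [:: j; i] v = [:: (nth 0 v j.-1, nth 0 v j); (nth 0 v i.-1, nth 0 v i)]].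
Proof.
move=> Hij /=; case/and4P=> i0 iv Hi /and4P[j0 jv Hj _].
rewrite size_swap ?i0 // in jv.
have Ej : forall k, k = j \/ k = j.-1 -> nth 0 (swap_at i v) k = nth 0 v k.
  move=> k Hk; rewrite nth_swap; case: (k =P i) => [?|_]; first lia.
  case: (k =P i.-1) => [?|//]; lia.
have Ei : forall k, k = i \/ k = i.-1 -> nth 0 (swap_at j v) k = nth 0 v k.
  move=> k Hk; rewrite nth_swap; case: (k =P j) => [?|_]; first lia.
  case: (k =P j.-1) => [?|//]; lia.
rewrite !Ej ?Ei; try by [left|right].
rewrite !Ej ?Ei in Hj; try by [left|right].
rewrite j0 jv Hj i0 Hi size_swap ?j0 // iv /=; split => //.
apply: (@eq_from_nth _ 0); first by rewrite !size_swap ?size_swap ?i0 ?j0 ?iv ?jv.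
move=> k _; rewrite !nth_swap.
have F1 : (j.-1 == i) = false by apply/eqP; lia.
have F2 : (j.-1 == i.-1) = false by apply/eqP; lia.
have F3 : (j == i) = false by apply/eqP; lia.
have F4 : (j == i.-1) = false by apply/eqP; lia.
have F5 : (i.-1 == j) = false by apply/eqP; lia.
have F6 : (i.-1 == j.-1) = false by apply/eqP; lia.
have F7 : (i == j) = false by apply/eqP; lia.
have F8 : (i == j.-1) = false by apply/eqP; lia.
rewrite F1 F2 F3 F4 F5 F6 F7 F8.
case: (eqVneq k j) => Hkj; case: (eqVneq k i) => Hki;
case: (eqVneq k j.-1) => H3; case: (eqVneq k i.-1) => H4 => //; try lia.
all: (move/eqP: Hkj; move/eqP: Hki; move/eqP: H3; move/eqP: H4; lia).
Qed.

From Stdlib Require Import Relations.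

Lemma comm_step_sym a b : comm_step a b -> comm_step b a.
Proof.
case=> x [y [i [j [H [-> ->]]]]]; exists x, y, j, i; split => //.
by rewrite orbC.
Qed.

Lemma comm_eq_sym a b : comm_eq a b -> comm_eq b a.
Proof.
elim=> [a' b' H|a'|a' b' c' _ H1 _ H2].
- by apply: rt_step; apply: comm_step_sym.
- exact: rt_refl.
- exact: rt_trans H2 H1.
Qed.

Lemma comm_eq_trans a b c : comm_eq a b -> comm_eq b c -> comm_eq a c.
Proof. exact: rt_trans. Qed.

Lemma comm_eq_refl a : comm_eq a a.
Proof. exact: rt_refl. Qed.

Lemma comm_eq_ctx (f : seq nat -> seq nat) a b :
  (forall a b, comm_step a b -> comm_step (f a) (f b)) -> comm_eq a b -> comm_eq (f a) (f b).
Proof.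
move=> Hf; elim=> [a' b' H|a'|a' b' c' _ H1 _ H2].
- by apply: rt_step; apply: Hf.
- exact: rt_refl.
- exact: rt_trans H1 H2.
Qed.

Lemma comm_eq_catl x a b : comm_eq a b -> comm_eq (x ++ a) (x ++ b).
Proof.
apply: (comm_eq_ctx (f := fun s => x ++ s)) => a' b' [x' [y' [i [j [H [-> ->]]]]]].
by exists (x ++ x'), y', i, j; rewrite !catA.
Qed.

Lemma comm_eq_catr y a b : comm_eq a b -> comm_eq (a ++ y) (b ++ y).
Proof.
apply: (comm_eq_ctx (f := fun s => s ++ y)) => a' b' [x' [y' [i [j [H [-> ->]]]]]].
by exists x', (y' ++ y), i, j; rewrite -!catA.
Qed.

Lemma comm_step_good u a b : comm_step a b -> good u a -> good u b /\ act a u = act b u.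
Proof.
case=> x [y [i [j [H [-> ->]]]]].
rewrite !good_cat !act_cat => /and3P[Hx H2 Hy].
have [G1 G2 _ _] := comm_local H H2.
by rewrite Hx G1 -G2 Hy.
Qed.

Lemma comm_eq_good u a b : comm_eq a b -> good u a -> good u b /\ act a u = act b u.
Proof.
elim=> [a' b' H|a'|a' b' c' _ H1 _ H2].
- exact: comm_step_good.
- by [].
- move=> G; have [G1 E1] := H1 G; have [G2 E2] := H2 G1; split => //; congruence.
Qed.

Lemma comm_eq_size a b : comm_eq a b -> size a = size b.
Proof.
elim=> [a' b' H|a'|a' b' c' _ H1 _ H2] //; last by congruence.
by case: H => x [y [i [j [_ [-> ->]]]]]; rewrite !size_cat.
Qed.

Lemma nsw_r i u : nth 0 (swap_at i u) i = nth 0 u i.-1.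
Proof. by rewrite nth_swap eqxx. Qed.
Lemma nsw_l i u : 0 < i -> nth 0 (swap_at i u) i.-1 = nth 0 u i.
Proof. by move=> H; rewrite nth_swap eqxx; case: eqP => //; lia. Qed.
Lemma nsw_o i u k : k <> i -> k <> i.-1 -> nth 0 (swap_at i u) k = nth 0 u k.
Proof. by move=> H1 H2; rewrite nth_swap; do 2 case: eqP => //. Qed.

Definition C1 (w : seq nat) d := [/\ 0 < d, d < size w, nth 0 w d < nth 0 w d.-1 &
  forall j, j < d.-1 -> nth 0 w j < nth 0 w d.-1].
Definition C2 (w : seq nat) d := [/\ 0 < d, d < size w, nth 0 w d < nth 0 w d.-1 &
  forall j, d < j < size w -> nth 0 w d < nth 0 w j].
Definition Pat1 a := exists x y i, comm_eq a (x ++ [:: i.+1; i; i.+1] ++ y).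
Definition Pat2 a := exists x y i, comm_eq a (x ++ [:: i; i.+1; i] ++ y).

Lemma Pat1_cat a b y : comm_eq a (b ++ y) -> Pat1 b -> Pat1 a.
Proof.
move=> H [x [z [i Hb]]]; exists x, (z ++ y), i.
apply: comm_eq_trans H _; have := comm_eq_catr y Hb; by rewrite -!catA.
Qed.

Lemma Pat2_cat a b y : comm_eq a (b ++ y) -> Pat2 b -> Pat2 a.
Proof.
move=> H [x [z [i Hb]]]; exists x, (z ++ y), i.
apply: comm_eq_trans H _; have := comm_eq_catr y Hb; by rewrite -!catA.
Qed.

Lemma C_iota n d : C1 (iota 1 n) d -> False.
Proof.
case=> d0; rewrite size_iota => dn; rewrite !nth_iota //; lia.
Qed.

Lemma C2_iota n d : C2 (iota 1 n) d -> False.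
Proof.
case=> d0; rewrite size_iota => dn; rewrite !nth_iota //; lia.
Qed.

Lemma KL1 n N : forall a d, size a <= N -> good (iota 1 n) a ->
  C1 (act a (iota 1 n)) d -> (exists c, comm_eq a (c ++ [:: d])) \/ Pat1 a.
Proof.
elim: N => [|N IH] a d.
  case/lastP: a => [|c e]; last by rewrite size_rcons.
  by move=> _ _ /C_iota.
case/lastP: a => [|c e]; first by move=> _ _ /C_iota.
rewrite -cats1 size_cat addn1 ltnS good_cat act_cat /=.
move=> Hs /andP[Gc /and4P[e0 ev Hev _]].
set u := iota 1 n in Gc *; set v := act c u in ev Hev *.
case=> d0 dw Hd Hj; rewrite size_swap ?e0 // in dw.
have Wr : nth 0 (swap_at e v) e = nth 0 v e.-1 by apply: nsw_r.
have Wl : nth 0 (swap_at e v) e.-1 = nth 0 v e by apply: nsw_l.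
have Wo : forall k, k <> e -> k <> e.-1 -> nth 0 (swap_at e v) k = nth 0 v k.
  by move=> k; apply: nsw_o.
case: (eqVneq e d) => [Ed|ned].
  by left; exists c; rewrite Ed; apply: comm_eq_refl.
case: (eqVneq e.+1 d) => [Ed|ned1].
  exfalso; have := Hj e.-1; rewrite -Ed /= Wl Wr; lia.
case: (eqVneq e d.+1) => [Ed|ned2].
  subst e; rewrite /= in Wl Wr Hev.
  have Vd : nth 0 v d = nth 0 (swap_at d.+1 v) d.+1 by rewrite Wr.
  have Vd1 : nth 0 v d.+1 = nth 0 (swap_at d.+1 v) d by rewrite Wl.
  have Vdm : nth 0 v d.-1 = nth 0 (swap_at d.+1 v) d.-1 by rewrite Wo //; lia.
  have Vj : forall j, j < d.-1 -> nth 0 v j = nth 0 (swap_at d.+1 v) j.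
    by move=> j jd; rewrite Wo //; lia.
  have Hc : C1 v d.
    rewrite /C1; split => //.
      by rewrite Vd Vdm; lia.
    by move=> j jd; rewrite Vj // Vdm; apply: Hj.
  case: (IH c d (Hs) Gc Hc) => [[c' Hc']|P1]; last first.
    by right; apply: (Pat1_cat (b := c)) => //; apply: comm_eq_refl.
  have [Gc' Ec'] := comm_eq_good Hc' Gc.
  move: Gc'; rewrite good_cat /= => /andP[Gc'' /and4P[_ dv' Hdv' _]].
  set v' := act c' u in dv' Hdv'.
  have Ev : v = swap_at d v' by rewrite /v Ec' act_cat.
  have Hs' : size c' <= N.
    by move: (comm_eq_size Hc') Hs; rewrite size_cat /=; lia.
  have U1 : nth 0 v d = nth 0 v' d.-1 by rewrite Ev nsw_r.
  have U2 : nth 0 v d.-1 = nth 0 v' d by rewrite Ev nsw_l.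
  have U3 : forall k, k <> d -> k <> d.-1 -> nth 0 v k = nth 0 v' k.
    by move=> k k1 k2; rewrite Ev nsw_o.
  have Hc2 : C1 v' d.+1.
    rewrite /C1; split => //=.
    - by move: ev; rewrite Ev size_swap ?d0.
    - rewrite -U3 ?U2; lia.
    - move=> j jd; rewrite -U2.
      case: (eqVneq j d.-1) => [->|jd1].
        rewrite -U1; lia.
      rewrite -U3; try lia.
      by rewrite Vj ?Vdm; [apply: Hj|]; lia.
  case: (IH c' d.+1 Hs' Gc'' Hc2) => [[c'' Hc'']|P1].
    right; exists c'', [::], d.
    rewrite cats0; apply: comm_eq_trans (comm_eq_catr [:: d.+1] Hc') _.
    by have := comm_eq_catr [:: d; d.+1] Hc''; rewrite -!catA.
  right; apply: (Pat1_cat (b := c') (y := [:: d; d.+1])) => //.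
  by rewrite -[[:: d; d.+1]]/([:: d] ++ [:: d.+1]) catA; apply: comm_eq_catr.
have Hc : C1 v d.
  rewrite /C1; split => //.
    rewrite -(Wo d) -?(Wo d.-1) //; lia.
  move=> j jd; rewrite -(Wo d.-1); try lia.
  case: (eqVneq j e) => [?|je]; first subst j.
    rewrite -Wl; apply: Hj; lia.
  case: (eqVneq j e.-1) => [?|je1]; first subst j.
    rewrite -Wr; apply: Hj; lia.
  rewrite -Wo; [apply: Hj; lia | lia | lia].
case: (IH c d Hs Gc Hc) => [[c' Hc']|P1]; last first.
  by right; apply: (Pat1_cat (b := c)) => //; apply: comm_eq_refl.
left; exists (c' ++ [:: e]).
apply: comm_eq_trans (comm_eq_catr [:: e] Hc') _.
rewrite -!catA /=; apply: rt_step; exists c', [::], d, e; split; first lia.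
by rewrite !cats0.
Qed.

Lemma KL2 n N : forall a d, size a <= N -> good (iota 1 n) a ->
  C2 (act a (iota 1 n)) d -> (exists c, comm_eq a (c ++ [:: d])) \/ Pat2 a.
Proof.
elim: N => [|N IH] a d.
  case/lastP: a => [|c e]; last by rewrite size_rcons.
  by move=> _ _ /C2_iota.
case/lastP: a => [|c e]; first by move=> _ _ /C2_iota.
rewrite -cats1 size_cat addn1 ltnS good_cat act_cat /=.
move=> Hs /andP[Gc /and4P[e0 ev Hev _]].
set u := iota 1 n in Gc *; set v := act c u in ev Hev *.
case=> d0 dw Hd Hj; rewrite size_swap ?e0 // in dw Hj.
have Wr : nth 0 (swap_at e v) e = nth 0 v e.-1 by apply: nsw_r.
have Wl : nth 0 (swap_at e v) e.-1 = nth 0 v e by apply: nsw_l.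
have Wo : forall k, k <> e -> k <> e.-1 -> nth 0 (swap_at e v) k = nth 0 v k.
  by move=> k; apply: nsw_o.
case: (eqVneq e d) => [Ed|ned].
  by left; exists c; rewrite Ed; apply: comm_eq_refl.
case: (eqVneq e d.+1) => [Ed|ned1].
  exfalso; subst e; have := Hj d.+1; rewrite /= in Wl Wr Hev; rewrite Wl Wr; lia.
case: (eqVneq e.+1 d) => [Ed|ned2].
  subst d.
  have A1 : nth 0 (swap_at e v) e.+1 = nth 0 v e.+1 by apply: Wo; lia.
  rewrite /= Wr A1 in Hd.
  have Hc : C2 v e.+1.
    rewrite /C2; split => //=; first lia.
    move=> j jd; rewrite -A1 -(Wo j); [apply: Hj; lia | lia | lia].
  case: (IH c e.+1 (Hs) Gc Hc) => [[c' Hc']|P1]; last first.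
    by right; apply: (Pat2_cat (b := c)) => //; apply: comm_eq_refl.
  have [Gc' Ec'] := comm_eq_good Hc' Gc.
  move: Gc'; rewrite good_cat /= => /andP[Gc'' /and3P[dv' Hdv' _]].
  set v' := act c' u in dv' Hdv'.
  have Ev : v = swap_at e.+1 v' by rewrite /v Ec' act_cat.
  have Hs' : size c' <= N.
    by move: (comm_eq_size Hc') Hs; rewrite size_cat /=; lia.
  have U1 : nth 0 v e.+1 = nth 0 v' e by rewrite Ev nsw_r.
  have U2 : nth 0 v e = nth 0 v' e.+1 by rewrite Ev (nsw_l v' (ltn0Sn e)).
  have U3 : forall k, k <> e.+1 -> k <> e -> nth 0 v k = nth 0 v' k.
    by move=> k k1 k2; rewrite Ev nsw_o.
  have X1 : nth 0 v e.+1 < nth 0 v e.-1 by [].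
  have Hc2 : C2 v' e.
    rewrite /C2; split => //=.
    - by move: ev; rewrite Ev size_swap ?dv' //; lia.
    - rewrite -U1 -U3; lia.
    - move=> j jd; rewrite -U1.
      case: (eqVneq j e.+1) => [?|jd1]; first subst j.
        rewrite -U2; lia.
      rewrite -U3; try lia.
      have Sv : size v = size v' by rewrite Ev size_swap ?dv'.
      have Hjj : e.+1 < j < size v by lia.
      have := Hj j Hjj; rewrite A1 Wo; lia.
  case: (IH c' e Hs' Gc'' Hc2) => [[c'' Hc'']|P1].
    right; exists c'', [::], e.
    rewrite cats0; apply: comm_eq_trans (comm_eq_catr [:: e] Hc') _.
    by have := comm_eq_catr [:: e.+1; e] Hc''; rewrite -!catA.
  right; apply: (Pat2_cat (b := c') (y := [:: e.+1; e])) => //.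
  by rewrite -[[:: e.+1; e]]/([:: e.+1] ++ [:: e]) catA; apply: comm_eq_catr.
have Hc : C2 v d.
  rewrite /C2; split => //.
    rewrite -(Wo d) -?(Wo d.-1) //; lia.
  move=> j jd; rewrite -(Wo d); try lia.
  case: (eqVneq j e) => [?|je]; first subst j.
    rewrite -Wl; apply: Hj; lia.
  case: (eqVneq j e.-1) => [?|je1]; first subst j.
    rewrite -Wr; apply: Hj; lia.
  rewrite -Wo; [apply: Hj; lia | lia | lia].
case: (IH c d Hs Gc Hc) => [[c' Hc']|P1]; last first.
  by right; apply: (Pat2_cat (b := c)) => //; apply: comm_eq_refl.
left; exists (c' ++ [:: e]).
apply: comm_eq_trans (comm_eq_catr [:: e] Hc') _.
rewrite -!catA /=; apply: rt_step; exists c', [::], d, e; split; first lia.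
by rewrite !cats0.
Qed.

Lemma mem_des u i : (i \in des u) = (0 < i < size u) && (nth 0 u i < nth 0 u i.-1).
Proof.
rewrite /des mem_filter mem_iota andbC; congr (_ && _).
case: (size u) => [|m] /=; lia.
Qed.

Lemma des_sorted u : sorted ltn (des u).
Proof. exact: (sorted_filter ltn_trans _ (iota_ltn_sorted _ _)). Qed.

Lemma path_last_max y s x : path ltn y s -> x \in y :: s -> x <= last y s.
Proof.
elim: s y x => [|z s IH] y x /=; first by rewrite inE => _ /eqP ->.
case/andP=> yz pz; rewrite inE; case/orP => [/eqP ->|xs].
  apply: leq_trans (ltnW yz) _; apply: (IH z z) => //; exact: mem_head.
exact: IH.
Qed.

Lemma head_min s x : sorted ltn s -> x \in s -> head 0 s <= x.
Proof.
case: s => [|y s] //= ps; rewrite inE; case/orP => [/eqP ->//|xs].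
have := order_path_min ltn_trans ps => /allP/(_ _ xs); exact: ltnW.
Qed.

Lemma last_max s x : sorted ltn s -> x \in s -> x <= last 0 s.
Proof. case: s => [|y s] //= ps; exact: path_last_max. Qed.

Lemma chain_le (w : seq nat) j m : (forall k, j <= k < m -> nth 0 w k <= nth 0 w k.+1) ->
  j <= m -> nth 0 w j <= nth 0 w m.
Proof.
elim: m => [|m IH] H jm; first by have -> : j = 0 by lia.
case: (eqVneq j m.+1) => [->//|jm1].
apply: (leq_trans (n := nth 0 w m)); last by apply: H; lia.
by apply: IH; [move=> k kj; apply: H; lia | lia].
Qed.

Lemma C1_head (w : seq nat) : uniq w -> des w != [::] -> C1 w (head 0 (des w)).
Proof.
move=> Uw; case Ed: (des w) => [|d s] // _ /=.
have : d \in des w by rewrite Ed mem_head.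
rewrite mem_des => /andP[/andP[d0 dw] Hd].
have Hmin : forall x, x \in des w -> d <= x.
  by move=> x xs; have := head_min (des_sorted w) xs; rewrite Ed.
split => // j jd.
have Hle : nth 0 w j <= nth 0 w d.-1.
  apply: chain_le; last lia.
  move=> k kj; have : k.+1 \notin des w by apply/negP => /Hmin; lia.
  rewrite mem_des /= ltnNge negb_and negbK => /orP[|//]; lia.
have S1 : j < size w by lia.
have S2 : d.-1 < size w by lia.
have : nth 0 w j != nth 0 w d.-1 by rewrite (nth_uniq 0 S1 S2 Uw); apply/eqP; lia.
lia.
Qed.

Lemma C2_last (w : seq nat) : uniq w -> des w != [::] -> C2 w (last 0 (des w)).
Proof.
move=> Uw Hne.
have Hd : last 0 (des w) \in des w.
  by case E: (des w) Hne => [|y s] // _ /=; have := mem_last y s; rewrite -E.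
set d := last 0 (des w) in Hd *.
move: (Hd); rewrite mem_des => /andP[/andP[d0 dw] Hd'].
have Hmax : forall x, x \in des w -> x <= d by move=> x xs; exact: last_max (des_sorted w) xs.
split => // j jd.
have Hle : nth 0 w d <= nth 0 w j.
  apply: chain_le; last lia.
  move=> k kj; have : k.+1 \notin des w by apply/negP => /Hmax; lia.
  rewrite mem_des /= ltnNge negb_and negbK => /orP[|//]; lia.
have S1 : j < size w by lia.
have : nth 0 w d != nth 0 w j by rewrite (nth_uniq 0 dw S1 Uw); apply/eqP; lia.
lia.
Qed.

Lemma last_desc u c e : good u (c ++ [:: e]) ->
  e \in des (act (c ++ [:: e]) u).
Proof.
rewrite good_cat act_cat /= => /andP[_ /and4P[e0 ev He _]].
rewrite mem_des size_swap ?e0 ?ev // nsw_r nsw_l //.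
Qed.

Lemma sort_snoc pick u c d : good u (c ++ [:: d]) ->
  pick (des (act (c ++ [:: d]) u)) = d ->
  sort_steps pick (size c).+1 (act (c ++ [:: d]) u) = d :: sort_steps pick (size c) (act c u).
Proof.
rewrite good_cat => /andP[_]; rewrite act_cat /= => /and4P[d0 dv _ _] Hp.
by rewrite Hp swapK ?d0.
Qed.

Lemma M1 n N : forall a, size a <= N -> good (iota 1 n) a ->
  comm_eq a (amin (act a (iota 1 n))) \/ Pat1 a.
Proof.
have Hnil : forall a, a = [::] -> comm_eq a (amin (act a (iota 1 n))) \/ Pat1 a.
  by move=> a ->; left; rewrite /amin /= ninv_iota; apply: comm_eq_refl.
elim: N => [|N IH] a.
  by case: a => [|? ?] //= _ _; apply: Hnil.
case/lastP: a => [|c e]; first by move=> *; apply: Hnil.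
rewrite -cats1 => Hs Hg.
have Uw : uniq (act (c ++ [:: e]) (iota 1 n)) by apply: good_uniq Hg (iota_uniq _ _).
have Hne : des (act (c ++ [:: e]) (iota 1 n)) != [::].
  by case E: (des _) (last_desc Hg) => [|? ?] //; rewrite E.
have HC := C1_head Uw Hne.
set w := act (c ++ [:: e]) (iota 1 n) in Uw Hne HC *.
set d := head 0 (des w) in HC *.
case: (KL1 Hs Hg HC) => [[c' Hc']|P]; last by right.
have [Gc' Ec'] := comm_eq_good Hc' Hg.
move: (Gc'); rewrite good_cat => /andP[Gc'' _].
have Hs' : size c' <= N by move: (comm_eq_size Hc') Hs; rewrite !size_cat /=; lia.
case: (IH c' Hs' Gc'') => [Hm|P1]; last first.
  by right; apply: (Pat1_cat Hc').
left; eapply comm_eq_trans; first exact: Hc'.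
have -> : amin w = amin (act c' (iota 1 n)) ++ [:: d].
  have Nw : ninv w = (size c').+1.
    by rewrite /w good_ninv // ninv_iota (comm_eq_size Hc') size_cat addn1.
  have Nv : ninv (act c' (iota 1 n)) = size c' by rewrite good_ninv // ninv_iota.
  rewrite /amin Nw Nv /w Ec' sort_snoc //; first by rewrite rev_cons cats1.
  by rewrite -Ec'.
by apply: comm_eq_catr.
Qed.

Lemma M2 n N : forall a, size a <= N -> good (iota 1 n) a ->
  comm_eq a (amax (act a (iota 1 n))) \/ Pat2 a.
Proof.
have Hnil : forall a, a = [::] -> comm_eq a (amax (act a (iota 1 n))) \/ Pat2 a.
  by move=> a ->; left; rewrite /amax /= ninv_iota; apply: comm_eq_refl.
elim: N => [|N IH] a.
  by case: a => [|? ?] //= _ _; apply: Hnil.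
case/lastP: a => [|c e]; first by move=> *; apply: Hnil.
rewrite -cats1 => Hs Hg.
have Uw : uniq (act (c ++ [:: e]) (iota 1 n)) by apply: good_uniq Hg (iota_uniq _ _).
have Hne : des (act (c ++ [:: e]) (iota 1 n)) != [::].
  by case E: (des _) (last_desc Hg) => [|? ?] //; rewrite E.
have HC := C2_last Uw Hne.
set w := act (c ++ [:: e]) (iota 1 n) in Uw Hne HC *.
set d := last 0 (des w) in HC *.
case: (KL2 Hs Hg HC) => [[c' Hc']|P]; last by right.
have [Gc' Ec'] := comm_eq_good Hc' Hg.
move: (Gc'); rewrite good_cat => /andP[Gc'' _].
have Hs' : size c' <= N by move: (comm_eq_size Hc') Hs; rewrite !size_cat /=; lia.
case: (IH c' Hs' Gc'') => [Hm|P1]; last first.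
  by right; apply: (Pat2_cat Hc').
left; eapply comm_eq_trans; first exact: Hc'.
have -> : amax w = amax (act c' (iota 1 n)) ++ [:: d].
  have Nw : ninv w = (size c').+1.
    by rewrite /w good_ninv // ninv_iota (comm_eq_size Hc') size_cat addn1.
  have Nv : ninv (act c' (iota 1 n)) = size c' by rewrite good_ninv // ninv_iota.
  rewrite /amax Nw Nv /w Ec' sort_snoc //; first by rewrite rev_cons cats1.
  by rewrite -Ec'.
by apply: comm_eq_catr.
Qed.

Lemma FC (T : Type) (p1 p2 : pred T) s1 m m' s2 :
  size m = size m' -> has p1 m = has p1 m' -> has p2 m = has p2 m' ->
  ~~ (has p1 m && has p2 m) ->
  (find p1 (s1 ++ m ++ s2) < find p2 (s1 ++ m ++ s2)) =
  (find p1 (s1 ++ m' ++ s2) < find p2 (s1 ++ m' ++ s2)).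
Proof.
move=> Sm E1 E2 N.
rewrite !find_cat -E1 -E2 -Sm.
have A1 := has_find p1 m; have A2 := has_find p2 m.
have B1 := has_find p1 m'; have B2 := has_find p2 m'.
rewrite -E1 in B1; rewrite -E2 in B2.
have C1' := has_find p1 s1; have C2' := has_find p2 s1.
case: (has p1 s1) in C1' *; case: (has p2 s1) in C2' * => //;
case H3: (has p1 m) in N A1 B1 *; case H4: (has p2 m) in N A2 B2 * => //=;
apply/idP/idP; lia.
Qed.

Lemma idx_swap u i X Y : uniq u -> 0 < i < size u -> nth 0 u i.-1 < nth 0 u i ->
  Y < X -> index X u < index Y u -> index X (swap_at i u) < index Y (swap_at i u).
Proof.
move=> Uu Hi Ha YX.
have [l [r [sl E]]] := decomp Hi.
have -> : i = (size l).+1 by lia.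
rewrite E swap_dec in Uu *.
set p := nth 0 u i.-1 in Uu Ha *; set q := nth 0 u i in Uu Ha *.
move: Uu; rewrite cat_uniq => /and3P[_ Hl Upq].
have pl : p \notin l by apply: contra Hl => H; apply/hasP; exists p => //; rewrite mem_head.
have ql : q \notin l by apply: contra Hl => H; apply/hasP; exists q => //; rewrite !inE eqxx orbT.
case B: (has (pred1 X) [:: p; q] && has (pred1 Y) [:: p; q]).
  move: B => /andP[]; rewrite /= !orbF => /orP[/eqP HX|/eqP HX] /orP[/eqP HY|/eqP HY]; subst; try lia.
  rewrite !index_cat (negbTE pl) (negbTE ql) /= !eqxx.
  case: (eqVneq p q) => [pq|npq] /= H; first exact: H.
  by move: H; rewrite addn0 addn1 ltnNge leqnSn.
have -> : l ++ [:: p, q & r] = l ++ [:: p; q] ++ r by [].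
have -> : l ++ [:: q, p & r] = l ++ [:: q; p] ++ r by [].
rewrite /index.
rewrite -(@FC _ (pred1 X) (pred1 Y) l [:: p; q] [:: q; p] r) //.
- by rewrite /= !orbF orbC.
- by rewrite /= !orbF orbC.
- by rewrite B.
Qed.

Lemma I2 a (u : seq nat) X Y : good u a -> uniq u -> Y < X -> index X u < index Y u ->
  index X (act a u) < index Y (act a u).
Proof.
elim: a u => [|i a IH] u //= /and4P[i0 iu Ha G] Uu YX H.
apply: IH => //; last by apply: idx_swap => //; rewrite i0.
by rewrite (perm_uniq (perm_swap _)) ?i0.
Qed.

Lemma I3 a (u : seq nat) : good u a -> uniq u -> forall pr, pr \in steps a u ->
  [/\ pr.1 < pr.2, index pr.2 (act a u) < index pr.1 (act a u), pr.1 \in u & pr.2 \in u].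
Proof.
elim: a u => [|i a IH] u //= /and4P[i0 iu Ha G] Uu pr.
have Hi : 0 < i < size u by rewrite i0.
have Uu' : uniq (swap_at i u) by rewrite (perm_uniq (perm_swap Hi)).
rewrite inE => /orP[/eqP ->|Hp] /=.
  split => //; try (apply: mem_nth; lia).
  apply: I2 => //.
  have [l [r [sl E]]] := decomp Hi.
  set p := nth 0 u i.-1 in E Ha *; set q := nth 0 u i in E Ha *.
  have Hsw : swap_at i u = l ++ q :: p :: r.
    by rewrite E (_ : i = (size l).+1) ?swap_dec //; lia.
  rewrite Hsw.
  have : uniq (l ++ p :: q :: r) by rewrite -E.
  rewrite cat_uniq => /and3P[_ Hl Upq].
  have pl : p \notin l by apply: contra Hl => H; apply/hasP; exists p => //; rewrite mem_head.
  have ql : q \notin l by apply: contra Hl => H; apply/hasP; exists q => //; rewrite !inE eqxx orbT.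
  rewrite !index_cat (negbTE pl) (negbTE ql) /= eqxx.
  case: (eqVneq q p) => [E'|_] /=; first by rewrite E' ltnn in Ha.
  by rewrite eqxx addn0 addn1 ltnSn.
  by apply: mem_nth; apply: leq_ltn_trans (leq_pred _) iu.
  by apply: mem_nth.
have [H1 H2 H3 H4] := IH _ G Uu' pr Hp.
by split => //; rewrite -(perm_mem (perm_swap Hi)).
Qed.

Definition pp (p q : nat) := fun pr : nat * nat => (pr == (p, q)) || (pr == (q, p)).

Lemma GammaE n a x y z : Gamma n a (x, y, z) =
  (find (pp z y) (steps a (iota 1 n)) < find (pp y x) (steps a (iota 1 n))).
Proof. by []. Qed.

Lemma nth_neq (v : seq nat) k1 k2 : uniq v -> k1 < size v -> k2 < size v -> k1 <> k2 ->
  nth 0 v k1 != nth 0 v k2.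
Proof. by move=> U h1 h2 h; rewrite nth_uniq //; apply/eqP. Qed.

Lemma comm_step_gamma n a b x y z : comm_step a b -> good (iota 1 n) a -> x < y -> y < z ->
  Gamma n a (x, y, z) = Gamma n b (x, y, z).
Proof.
case=> x0 [y0 [i [j [H [-> ->]]]]] G xy yz.
rewrite !GammaE !steps_cat.
move: G; rewrite good_cat => /andP[G1 G2].
have U : uniq (act x0 (iota 1 n)) by apply: good_uniq G1 (iota_uniq _ _).
move: G2; rewrite good_cat => /andP[G2 _].
set v := act x0 (iota 1 n) in U G2 *.
have [_ Ea Sa Sb] := comm_local H G2.
rewrite Sa Sb -Ea.
move: G2 => /= /and4P[i0 iv _ /and4P[j0 jv _ _]].
rewrite size_swap ?i0 // in jv.
have D : forall k1 k2, k1 = i.-1 \/ k1 = i -> k2 = j.-1 \/ k2 = j -> nth 0 v k1 != nth 0 v k2.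
  by move=> k1 k2 h1 h2; apply: nth_neq => //; lia.
have d1 := D i.-1 j.-1 (or_introl erefl) (or_introl erefl).
have d2 := D i.-1 j (or_introl erefl) (or_intror erefl).
have d3 := D i j.-1 (or_intror erefl) (or_introl erefl).
have d4 := D i j (or_intror erefl) (or_intror erefl).
have e1 : nth 0 v i.-1 != nth 0 v i by apply: nth_neq => //; lia.
have e2 : nth 0 v j.-1 != nth 0 v j by apply: nth_neq => //; lia.
rewrite -[_ :: _ :: _]/([:: _; _] ++ _) -[(nth 0 v j.-1, _) :: _ :: _]/([:: _; _] ++ _).
apply: FC => //.
- by rewrite /= !orbF orbC.
- by rewrite /= !orbF orbC.
- apply/negP => /andP[]; rewrite /pp /= !orbF !xpair_eqE; lia.
Qed.

Lemma Tw_ord w x y z : (x, y, z) \in Tw w -> x < y /\ y < z.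
Proof. by rewrite /Tw mem_filter => /andP[/and4P[]]. Qed.

Lemma comm_eq_sup n w a b : comm_eq a b -> good (iota 1 n) a -> sup n w a = sup n w b.
Proof.
elim=> [a' b' H|a'|a' b' c' Hab H1 Hbc H2] G //.
- apply: eq_in_filter => [[[x y] z]] /Tw_ord [xy yz]; exact: comm_step_gamma.
- have [Gb _] := comm_eq_good Hab G.
  by rewrite H1 // H2.
Qed.

Lemma swap_dec2 l X Y Z r : swap_at (size l).+2 (l ++ X :: Y :: Z :: r) = l ++ X :: Z :: Y :: r.
Proof.
have H := swap_dec (l ++ [:: X]) Y Z r.
rewrite -!catA size_cat addn1 in H; exact: H.
Qed.

Lemma nthL l s k : nth 0 (l ++ s) (size l + k) = nth 0 s k.
Proof. by rewrite nth_cat ltnNge leq_addr /= addKn. Qed.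
Lemma nthL0 l s : nth 0 (l ++ s) (size l) = nth 0 s 0.
Proof. by rewrite -(addn0 (size l)) nthL. Qed.
Lemma nthL1 l s : nth 0 (l ++ s) (size l).+1 = nth 0 s 1.
Proof. by rewrite -addn1 nthL. Qed.
Lemma nthL2 l s : nth 0 (l ++ s) (size l).+2 = nth 0 s 2.
Proof. by rewrite -addn2 nthL. Qed.

Lemma braid_facts l A B C r :
  let i := (size l).+1 in let v := l ++ [:: A, B, C & r] in
  (good v [:: i.+1; i; i.+1] = [&& B < C, A < C & A < B]) /\
  (good v [:: i; i.+1; i] = [&& A < B, A < C & B < C]) /\
  (act [:: i.+1; i; i.+1] v = l ++ [:: C, B, A & r]) /\
  (act [:: i; i.+1; i] v = l ++ [:: C, B, A & r]) /\
  (steps [:: i.+1; i; i.+1] v = [:: (B, C); (A, C); (A, B)]) /\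
  (steps [:: i; i.+1; i] v = [:: (A, B); (A, C); (B, C)]).
Proof.
move=> i v; rewrite /i /v /=.
do 3 rewrite ?swap_dec2 ?swap_dec.
rewrite ?nthL0 ?nthL1 ?nthL2 !size_cat /=.
by split; [|split; [|split; [|split; [|split]]]] => //; apply/idP/idP; lia.
Qed.

Lemma idx3 (l r : seq nat) X Y Z : uniq (l ++ [:: X, Y, Z & r]) ->
  [/\ index X (l ++ [:: X, Y, Z & r]) = size l,
      index Y (l ++ [:: X, Y, Z & r]) = (size l).+1 &
      index Z (l ++ [:: X, Y, Z & r]) = (size l).+2].
Proof.
rewrite cat_uniq => /and3P[_ Hl U].
have nl : forall k, k \in [:: X, Y, Z & r] -> k \notin l.
  by move=> k kin; apply: contra Hl => kl; apply/hasP; exists k.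
move: U => /= /and4P[]; rewrite !inE !negb_or => /and3P[xy xz _] /andP[yz _] _ _.
rewrite !index_cat !(negbTE (nl _ _)) ?inE ?eqxx ?orbT //= eqxx.
rewrite (negbTE xy) (negbTE xz) (negbTE yz) !eqxx.
by rewrite addn0 addn1 addn2.
Qed.

Lemma Tw_mem (w : seq nat) x y z : x \in w -> y \in w -> z \in w -> x < y -> y < z ->
  index z w < index y w -> index y w < index x w -> (x, y, z) \in Tw w.
Proof.
move=> xw yw zw xy yz i1 i2; rewrite /Tw mem_filter xy yz i1 i2 /=.
apply/flatten_mapP; exists x => //; apply/flatten_mapP; exists y => //.
by apply/mapP; exists z.
Qed.

Lemma has3 (p : pred (nat * nat)) a1 a2 a3 : has p [:: a1; a2; a3] = has p [:: a3; a2; a1].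
Proof. by rewrite /=; case: (p a1); case: (p a2); case: (p a3). Qed.

Lemma braid_sup n x y i : good (iota 1 n) (x ++ [:: i.+1; i; i.+1] ++ y) ->
  let a := x ++ [:: i.+1; i; i.+1] ++ y in let b := x ++ [:: i; i.+1; i] ++ y in
  let w := act a (iota 1 n) in
  [/\ good (iota 1 n) b, act b (iota 1 n) = w &
      exists t, [/\ t \in sup n w a, t \notin sup n w b &
        forall t', t' \in Tw w -> t' <> t -> Gamma n b t' = Gamma n a t']].
Proof.
move=> G a b w.
move: (G); rewrite good_cat => /andP[Gx]; rewrite good_cat => /andP[Gm Gy].
have U : uniq (act x (iota 1 n)) by apply: good_uniq Gx (iota_uniq _ _).
set v := act x (iota 1 n) in U Gm Gy *.
have [i0 iv] : 0 < i /\ i.+1 < size v.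
  by move: (good_range Gm) => /= /and4P[h /andP[h0 _] _ _].
have Hi : 0 < i < size v by rewrite i0 /=; lia.
have [l [r' [sl E]]] := decomp Hi.
move: E; case Er: r' => [|C r] E; first by move: iv; rewrite E size_cat /= sl; lia.
set A := nth 0 v i.-1 in E; set B := nth 0 v i in E.
clearbody A B.
have Ei : i = (size l).+1 by lia.
rewrite E in U Gm Gy *; rewrite Ei in Gm Gy a b w *.
have [F1 [F2 [F3 [F4 [F5 F6]]]]] := braid_facts l A B C r.
move: Gm; rewrite F1 => /and3P[BC AC AB].
have Gb : good (iota 1 n) b.
  by rewrite /b !good_cat Gx -/v E F2 AB AC BC F4 -F3 Gy.
rewrite F3 in Gy.
have Eb : act b (iota 1 n) = w by rewrite /b /w /a !act_cat -/v E F3 F4.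
split => //.
have Sa : steps a (iota 1 n) = steps x (iota 1 n) ++ [:: (B, C); (A, C); (A, B)] ++ steps y (l ++ [:: C, B, A & r]).
  by rewrite /a !steps_cat -/v E F5 F3.
have Sb : steps b (iota 1 n) = steps x (iota 1 n) ++ [:: (A, B); (A, C); (B, C)] ++ steps y (l ++ [:: C, B, A & r]).
  by rewrite /b !steps_cat -/v E F6 F4.
have Wy : w = act y (l ++ [:: C, B, A & r]) by rewrite /w /a !act_cat -/v E F3.
have U2 : uniq (l ++ [:: C, B, A & r]).
  by rewrite -F3; apply: good_uniq => //; rewrite F1 BC AC AB.
have [iA iB iC] := idx3 U.
have [jC jB jA] := idx3 U2.
have Hs1 : forall p q, q < p -> p \in [:: A; B; C] -> q \in [:: A; B; C] ->
    has (pp p q) (steps x (iota 1 n)) = false.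
  move=> p q qp pin qin; apply/negP => /hasP[pr prin Hpr].
  have [h1 h2 _ _] := I3 Gx (iota_uniq _ _) prin.
  rewrite -/v E in h2.
  move: Hpr; rewrite /pp => /orP[/eqP Ep|/eqP Ep]; rewrite Ep /= in h1 h2.
    by have := ltn_trans h1 qp; rewrite ltnn.
  move: pin qin h2 qp; rewrite !inE; clear -iA iB iC AB BC AC.
  move=> /or3P[/eqP->|/eqP->|/eqP->] /or3P[/eqP->|/eqP->|/eqP->];
    rewrite ?iA ?iB ?iC; lia.
have mA : A \in w by rewrite Wy (perm_mem (good_perm Gy)) mem_cat !inE eqxx !orbT.
have mB : B \in w by rewrite Wy (perm_mem (good_perm Gy)) mem_cat !inE eqxx !orbT.
have mC : C \in w by rewrite Wy (perm_mem (good_perm Gy)) mem_cat !inE eqxx !orbT.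
have Tt : (A, B, C) \in Tw w.
  apply: Tw_mem => //; rewrite Wy.
    by apply: I2 => //; rewrite ?jB ?jC.
  by apply: I2 => //; rewrite ?jA ?jB.
have GaT : Gamma n a (A, B, C).
  rewrite GammaE Sa !find_cat !Hs1 ?inE ?eqxx ?orbT //= /pp !xpair_eqE.
  rewrite (ltn_eqF BC) (ltn_eqF AB) (ltn_eqF AC) (gtn_eqF AC) (gtn_eqF AB) (gtn_eqF BC) /= !eqxx /=.
  by rewrite ltn_add2l.
have GbT : ~~ Gamma n b (A, B, C).
  rewrite GammaE Sb !find_cat !Hs1 ?inE ?eqxx ?orbT //= /pp !xpair_eqE.
  rewrite (ltn_eqF BC) (ltn_eqF AB) (ltn_eqF AC) (gtn_eqF AC) (gtn_eqF AB) (gtn_eqF BC) /= !eqxx /=.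
  by rewrite ltn_add2l.
exists (A, B, C); split.
- by rewrite mem_filter Tt GaT.
- by rewrite mem_filter Tt andbT.
move=> [[x' y'] z'] Tt' Hne.
have [xy yz] := Tw_ord Tt'.
rewrite !GammaE Sa Sb.
symmetry; apply: FC => //; try by rewrite has3.
apply/negP => /andP[]; rewrite /pp /= !orbF !xpair_eqE => h1 h2.
apply: Hne; move: h1 h2; clear -xy yz AB BC AC => h1 h2.
by have [-> [-> ->]] : x' = A /\ y' = B /\ z' = C by lia.
Qed.

Lemma braid_good2 (u : seq nat) x y i : good u (x ++ [:: i; i.+1; i] ++ y) ->
  good u (x ++ [:: i.+1; i; i.+1] ++ y) /\
  act (x ++ [:: i.+1; i; i.+1] ++ y) u = act (x ++ [:: i; i.+1; i] ++ y) u.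
Proof.
move=> G; move: (G); rewrite good_cat => /andP[Gx]; rewrite good_cat => /andP[Gm Gy].
set v := act x u in Gm Gy *.
have [i0 iv] : 0 < i /\ i.+1 < size v.
  by move: (good_range Gm) => /= /and4P[/andP[h0 _] h _ _].
have Hi : 0 < i < size v by rewrite i0 /=; lia.
have [l [r' [sl E]]] := decomp Hi.
move: E; case Er: r' => [|C r] E; first by move: iv; rewrite E size_cat /= sl; lia.
set A := nth 0 v i.-1 in E; set B := nth 0 v i in E.
have Ei : i = (size l).+1 by lia.
rewrite Ei in Gm Gy *.
have [F1 [F2 [F3 [F4 _]]]] := braid_facts l A B C r.
rewrite E F2 in Gm; rewrite E F4 in Gy.
move: Gm => /and3P[AB AC BC].
rewrite !good_cat !act_cat Gx -/v E F1 F3 F4 Gy AB AC BC.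
by [].
Qed.

Theorem mainTheorem6 (n : nat) (w a : seq nat) :
  is_perm n w -> reduced n w a ->
  (~ comm_eq a (amin w) ->
     exists b, reduced n w b /\ adjacent b a /\
               strict_subset (sup n w b) (sup n w a)) /\
  (~ comm_eq a (amax w) ->
     exists b, reduced n w b /\ adjacent b a /\
               strict_subset (sup n w a) (sup n w b)).
Proof.
move=> Hp Hr.
have G := reduced_good Hr.
have [_ [Hsz Hact]] := Hr.
have Hred : forall b, good (iota 1 n) b -> size b = size a -> act b (iota 1 n) = w -> reduced n w b.
  move=> b Gb Sb Eb; split; last by rewrite Sb.
  apply/allP => j /(allP (good_range Gb)); rewrite size_iota; lia.
split.
- move=> Hna.
  case: (M1 (leqnn (size a)) G) => [H|[x [y [i Hc]]]]; first by rewrite Hact in H.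
  have [Ga' Ea'] := comm_eq_good Hc G.
  have [Gb Eb [t [t1 t2 t3]]] := braid_sup Ga'.
  rewrite -Ea' Hact in Eb t1 t2 t3.
  have Ss := comm_eq_sup w Hc G.
  exists (x ++ [:: i; i.+1; i] ++ y); split.
    apply: Hred => //; rewrite (comm_eq_size Hc) !size_cat //.
  split; [split|].
  + move=> Hba; have := comm_eq_sup w Hba Gb; rewrite Ss => E.
    by move: t2; rewrite E t1.
  + exists (x ++ [:: i; i.+1; i] ++ y), (x ++ [:: i.+1; i; i.+1] ++ y); split.
      exact: comm_eq_refl.
    split => //; exists x, y, i; by left.
  + rewrite Ss; split.
      move=> t' Ht'; case: (eqVneq t' t) => [E|Hne]; first by move: t2; rewrite -E Ht'.
      move: Ht'; rewrite mem_filter => /andP[Hg Ht]; rewrite mem_filter Ht andbT -t3 //; exact/eqP.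
    by move=> Hs; move: t2; rewrite Hs.
- move=> Hna.
  case: (M2 (leqnn (size a)) G) => [H|[x [y [i Hc]]]]; first by rewrite Hact in H.
  have [Ga' Ea'] := comm_eq_good Hc G.
  have [Gb Eb'] := braid_good2 Ga'.
  have [_ _ [t [t1 t2 t3]]] := braid_sup Gb.
  rewrite Eb' -Ea' Hact in t1 t2 t3.
  have Ss := comm_eq_sup w Hc G.
  exists (x ++ [:: i.+1; i; i.+1] ++ y); split.
    apply: Hred => //; last by rewrite Eb' -Ea'.
    by rewrite (comm_eq_size Hc) !size_cat.
  split; [split|].
  + move=> Hba; have := comm_eq_sup w Hba Gb; rewrite Ss => E.
    by move: t2; rewrite -E t1.
  + exists (x ++ [:: i.+1; i; i.+1] ++ y), (x ++ [:: i; i.+1; i] ++ y); split.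
      exact: comm_eq_refl.
    split => //; exists x, y, i; by right.
  + rewrite Ss; split.
      move=> t' Ht'; case: (eqVneq t' t) => [E|Hne]; first by move: t2; rewrite -E Ht'.
      move: Ht'; rewrite mem_filter => /andP[Hg Ht]; rewrite mem_filter Ht andbT -t3 //; exact/eqP.
    by move=> Hs; move: t2; rewrite Hs.
Qed.
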